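(* Let $(M,d)$ be a pointed metric space. The space $\mathrm{Lip}_0(M)$ has the $w^*$-D2P if and only if $M$ has the Lip-LTP.
   Context: $M$ has base point $0$; $\mathrm{Lip}_0(M)$ is the real Banach space of Lipschitz $f\colon M\to\mathbb R$ with $f(0)=0$, normed by the best Lipschitz constant, with unit ball $B_{\mathrm{Lip}_0(M)}$. $\mathrm{Lip}_0(M)$ is the dual of the Lipschitz-free space $\mathcal F(M)$, the norm-closed linear span of the evaluations $\delta_x$ ($x\in M$) in $\mathrm{Lip}_0(M)^*$; the weak-star topology on $\mathrm{Lip}_0(M)$ is the one induced by $\mathcal F(M)$. $\mathrm{Lip}_0(M)$ has the $w^*$-D2P if every nonempty relatively weak-star open subset of $B_{\mathrm{Lip}_0(M)}$ has diameter $2$. $M$ has the Lip-LTP if for every finite $N\subseteq M$, every $\varepsilon>0$ and every $f\in B_{\mathrm{Lip}_0(M)}$ there exist $u,v\in M$ with $u\ne v$ such that for all $x,y\in N$, $(1-\varepsilon)(|f(x)-f(y)|+d(u,v))\le d(x,u)+d(y,v)$. *)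

(* Defs.v *)
From HB Require Import structures.
From mathcomp Require Import all_boot all_order all_algebra.
From mathcomp Require Import boolp classical_sets cardinality reals.
Set Implicit Arguments. Unset Strict Implicit. Unset Printing Implicit Defensive.
Import Order.TTheory GRing.Theory Num.Theory.
Local Open Scope ring_scope.
Local Open Scope classical_set_scope.

Section LipFree.
Variables (R : realType) (T : Type) (d : T -> T -> R) (x0 : T).

Definition is_metric :=
  (forall x y, d x y = 0 <-> x = y) /\
  (forall x y, d x y = d y x) /\
  (forall x y z, d x z <= d x y + d y z).

Definition lipschitz_with (L : R) (f : T -> R) :=
  forall x y, `|f x - f y| <= L * d x y.

Definition Lip0 (f : T -> R) := (exists L, lipschitz_with L f) /\ f x0 = 0.

Definition lipnorm (f : T -> R) : R :=
  sup [set r | exists x y, x <> y /\ r = `|f x - f y| / d x y].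

Definition lip_ball (f : T -> R) := f x0 = 0 /\ lipschitz_with 1 f.

(* evaluation of the finitely supported molecule sum_i a_i delta_{x_i} *)
Definition molecule_eval (c : seq (R * T)) (f : T -> R) : R :=
  \sum_(p <- c) p.1 * f p.2.

(* phi (a functional on Lip_0(M)) belongs to F(M), the norm closure in
   Lip_0(M)^* of span{delta_x}: it is a dual-norm limit of molecules. *)
Definition in_free (phi : (T -> R) -> R) :=
  forall eps : R, 0 < eps -> exists c : seq (R * T),
    forall (L : R) (f : T -> R), 0 <= L -> lipschitz_with L f -> f x0 = 0 ->
      `|phi f - molecule_eval c f| <= eps * L.

(* V is a relatively weak-star (sigma(Lip_0, F(M))) open subset of the ball *)
Definition wstar_rel_open (V : set (T -> R)) :=
  V `<=` lip_ball /\
  forall f, V f -> exists (n : nat) (phi : 'I_n -> ((T -> R) -> R)) (eps : R),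
    0 < eps /\ (forall i, in_free (phi i)) /\
    forall g, lip_ball g -> (forall i, `|phi i g - phi i f| < eps) -> V g.

Definition lip_diam (V : set (T -> R)) : R :=
  sup [set r | exists f g, V f /\ V g /\ r = lipnorm (f \- g)].

Definition wstar_D2P :=
  forall V, wstar_rel_open V -> V !=set0 -> lip_diam V = 2.

Definition Lip_LTP :=
  forall (N : set T) (eps : R) (f : T -> R),
    finite_set N -> 0 < eps -> lip_ball f ->
    exists u v, u <> v /\
      forall x y, N x -> N y ->
        (1 - eps) * (`|f x - f y| + d u v) <= d x u + d y v.

End LipFree.

(* Main.v *)
Require Import Defs.
From mathcomp Require Import all_boot all_order all_algebra.
From mathcomp Require Import boolp classical_sets cardinality reals.
From mathcomp Require Import ring lra.
Import Order.TTheory GRing.Theory Num.Theory.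
Local Open Scope classical_set_scope.
Local Open Scope ring_scope.
Set Implicit Arguments. Unset Strict Implicit.

Section Aux.
Variable R : realType.

Definition mn (a b : R) := if a <= b then a else b.
Lemma mn_l a b : mn a b <= a.
Proof. rewrite /mn; case: ifP => // /negbT; rewrite -ltNge => /ltW. done. Qed.
Lemma mn_r a b : mn a b <= b.
Proof. rewrite /mn; case: ifP => //. Qed.
Lemma mn_ge c a b : c <= a -> c <= b -> c <= mn a b.
Proof. by rewrite /mn; case: ifP. Qed.
Lemma mn_gt c a b : c < a -> c < b -> c < mn a b.
Proof. by rewrite /mn; case: ifP. Qed.
Lemma mn_cases a b : mn a b = a \/ mn a b = b.
Proof. by rewrite /mn; case: ifP; [left|right]. Qed.

Lemma minpos (l : seq R) : (forall r, r \in l -> 0 < r) ->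
  exists m, 0 < m /\ forall r, r \in l -> m <= r.
Proof.
elim: l => [|a l IH] H; first by exists 1; split => //.
have [m [m0 Hm]] : exists m, 0 < m /\ forall r, r \in l -> m <= r.
  by apply: IH => r rl; apply: H; rewrite inE rl orbT.
exists (mn a m); split.
  by apply: mn_gt => //; apply: H; rewrite inE eqxx.
move=> r; rewrite inE => /orP [/eqP->|rl]; first exact: mn_l.
exact: le_trans (mn_r _ _) (Hm _ rl).
Qed.
End Aux.

Section Metric.
Variables (R : realType) (T : choiceType) (d : T -> T -> R) (x0 : T).
Hypothesis hd : is_metric d.

Lemma d_refl x : d x x = 0.
Proof. by case: hd => H _; apply/H. Qed.
Lemma d_sym x y : d x y = d y x.
Proof. by case: hd => _ []. Qed.
Lemma d_tri x y z : d x z <= d x y + d y z.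
Proof. by case: hd => _ []. Qed.
Lemma d_ge0 x y : 0 <= d x y.
Proof. have := d_tri x y x; rewrite d_refl (d_sym y x); lra. Qed.
Lemma d_pos x y : x <> y -> 0 < d x y.
Proof.
move=> xy; rewrite lt_def d_ge0 andbT; apply/negP => /eqP H.
by apply: xy; case: hd => H1 _; apply/H1.
Qed.

Lemma lipP (g : T -> R) : (forall x y, g x <= g y + d x y) -> lipschitz_with d 1 g.
Proof.
move=> H x y; rewrite mul1r ler_norml; have := H x y; have := H y x.
rewrite d_sym; lra.
Qed.
Lemma lipE (g : T -> R) : lipschitz_with d 1 g -> forall x y, g x <= g y + d x y.
Proof. by move=> H x y; have := H x y; rewrite mul1r ler_norml; lra. Qed.

Lemma lip_dist a u : lipschitz_with d 1 (fun z => a + d z u).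
Proof. by apply: lipP => x y; have := d_tri x y u; lra. Qed.

Lemma lip_mn g h : lipschitz_with d 1 g -> lipschitz_with d 1 h ->
  lipschitz_with d 1 (fun z => mn (g z) (h z)).
Proof.
move=> /lipE Hg /lipE Hh; apply: lipP => x y.
case: (mn_cases (g y) (h y)) => ->.
  by apply: le_trans (mn_l _ _) _.
by apply: le_trans (mn_r _ _) _.
Qed.

Fixpoint Fm (g : T -> R) (s : seq T) z :=
  match s with [::] => g x0 + d z x0 | a :: s' => mn (g a + d z a) (Fm g s' z) end.

Lemma Fm_le g s z x : x \in x0 :: s -> Fm g s z <= g x + d z x.
Proof.
elim: s => [|a s IH] /=.
  by rewrite inE => /eqP ->.
rewrite !inE => /or3P [/eqP Hx|/eqP->|xs].
- apply: le_trans (mn_r _ _) _; apply: IH; by rewrite Hx inE eqxx.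
- exact: mn_l.
- apply: le_trans (mn_r _ _) _; apply: IH; by rewrite inE xs orbT.
Qed.

Lemma Fm_ge g s z c : (forall x, x \in x0 :: s -> c <= g x + d z x) -> c <= Fm g s z.
Proof.
elim: s => [|a s IH] H /=.
  by apply: H; rewrite inE eqxx.
apply: mn_ge; first by apply: H; rewrite !inE eqxx orbT.
apply: IH => x; rewrite inE => /orP [/eqP->|xs]; apply: H.
  by rewrite inE eqxx.
by rewrite !inE xs !orbT.
Qed.

Lemma Fm_lip g s : lipschitz_with d 1 (Fm g s).
Proof.
apply: lipP => z w; rewrite -lerBlDr; apply: Fm_ge => x xs.
have := Fm_le g z xs; have := d_tri z w x; lra.
Qed.

Lemma Fm_eq g s x : (forall y z, y \in x0 :: s -> z \in x0 :: s -> g y <= g z + d y z) ->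
  x \in x0 :: s -> Fm g s x = g x.
Proof.
move=> Hg xs; apply/le_anti/andP; split.
  by have := Fm_le g x xs; rewrite d_refl addr0.
by apply: Fm_ge => y ys; apply: Hg.
Qed.

End Metric.

Section Norms.
Variables (R : realType) (T : choiceType) (d : T -> T -> R) (x0 : T).
Hypothesis hd : is_metric d.

Lemma mol_scale (c : seq (R * T)) (g f : T -> R) k :
  (forall p, p \in c -> g p.2 = k * f p.2) ->
  molecule_eval c g = k * molecule_eval c f.
Proof.
move=> H; rewrite /molecule_eval big_seq [in RHS]big_seq mulr_sumr.
by apply: eq_bigr => p pc; rewrite H // mulrCA.
Qed.

Lemma lipnorm_le2 g h : lip_ball d x0 g -> lip_ball d x0 h ->
  lipnorm d (g \- h) <= 2.
Proof.
move=> [_ Hg] [_ Hh]; rewrite /lipnorm.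
set S := [set r | _].
have [[r Sr]|S0] := pselect (S !=set0); last first.
  have -> : S = set0 by apply/seteqP; split=> // r Sr; apply: S0; exists r.
  by rewrite sup0.
apply: ge_sup; first by exists r.
move=> _ [x [y [xy ->]]].
have dp := d_pos hd xy.
rewrite ler_pdivrMr //=.
have := Hg x y; have := Hh x y; rewrite !mul1r.
have := ler_normB (g x - g y) (h x - h y).
have -> : g x - h x - (g y - h y) = (g x - g y) - (h x - h y) by ring.
lra.
Qed.

Lemma lipnorm_ge g h u v : lip_ball d x0 g -> lip_ball d x0 h -> u <> v ->
  `|(g u - h u) - (g v - h v)| / d u v <= lipnorm d (g \- h).
Proof.
move=> Bg Bh uv; rewrite /lipnorm.
apply: ub_le_sup; last by exists u, v.
exists 2 => _ [x [y [xy ->]]].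
have dp := d_pos hd xy.
case: Bg Bh => _ Hg [_ Hh].
rewrite ler_pdivrMr //=.
have := Hg x y; have := Hh x y; rewrite !mul1r.
have := ler_normB (g x - g y) (h x - h y).
have -> : g x - h x - (g y - h y) = (g x - g y) - (h x - h y) by ring.
lra.
Qed.
End Norms.

Section Dir2.
Variables (R : realType) (T : choiceType) (d : T -> T -> R) (x0 : T).
Hypothesis hd : is_metric d.

Lemma ltp_core (f g h : T -> R) (s : seq T) (e m t delta et : R) u v :
  0 < e -> e <= 1/2 -> 0 < m ->
  (forall x y, x \in s -> y \in s -> x != y -> m <= d x y) ->
  2 * t = e * m -> 4 * delta = e * t -> 2 * et = e ->
  lip_ball d x0 f -> lip_ball d x0 g -> lip_ball d x0 h ->
  (forall x, x \in s -> `|g x - f x| < delta) ->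
  (forall x, x \in s -> `|h x - f x| < delta) ->
  (2 - et) * d u v < (g u - g v) - (h u - h v) ->
  forall x y, x \in s -> y \in s ->
    (1 - e) * (`|f x - f y| + d u v) <= d x u + d y v.
Proof.
move=> e0 e12 m0 Hm ht hdl het [_ /lipE Lf] [_ /lipE Lg] [_ /lipE Lh]
  Cg Ch Huv x y xs ys.
have Eeta : et = e / 2 by lra.
subst et.
have D0 := d_ge0 hd u v.
have eD : 0 <= e * d u v by apply: mulr_ge0 => //; lra.
have g1 := Lg u v; have h1 := Lh v u; rewrite (d_sym hd v u) in h1.
have Hg : (1 - e / 2) * d u v < g u - g v by lra.
have Hh : (1 - e / 2) * d u v < h v - h u by lra.
have [<-|xy] := eqVneq x y.
  rewrite subrr normr0 add0r.
  have := d_tri hd u x v; rewrite (d_sym hd u x); lra.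
have dm := Hm _ _ xs ys xy.
have A0 := Lf x y; have A1 := Lf y x; rewrite (d_sym hd y x) in A1.
have Hgx := Cg _ xs; have Hgy := Cg _ ys; have Hhx := Ch _ xs; have Hhy := Ch _ ys.
move: Hgx Hgy Hhx Hhy; rewrite !ltr_norml => Hgx Hgy Hhx Hhy.
have gux := Lg u x; have gyv := Lg y v; have hxu := Lh x u; have hvy := Lh v y.
rewrite (d_sym hd u x) in gux; rewrite (d_sym hd v y) in hvy.
have [Dt|Dt] := lerP t (d u v).
  have eDt : 0 <= e * (d u v - t) by apply: mulr_ge0; lra.
  have [HA|HA] := lerP 0 (f x - f y); [rewrite ger0_norm // | rewrite ltr0_norm //].
    have eA : 0 <= e * (f x - f y) by apply: mulr_ge0; lra.
    lra.
  have eA : 0 <= e * - (f x - f y) by apply: mulr_ge0; lra.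
  lra.
have tri : d x y <= d x u + d u v + d y v.
  have := d_tri hd x u y; have := d_tri hd u v y; rewrite (d_sym hd v y); lra.
have e1 : 0 <= e * (d x y - m) by apply: mulr_ge0; lra.
have A2 : `|f x - f y| <= d x y by rewrite ler_norml; lra.
have e2 : 0 <= (1 - e) * (d x y - `|f x - f y|) by apply: mulr_ge0; lra.
lra.
Qed.
End Dir2.

Section Dir2main.
Variables (R : realType) (T : choiceType) (d : T -> T -> R) (x0 : T).
Hypothesis hd : is_metric d.

Lemma minsep (s : seq T) : exists m, 0 < m /\
  forall x y, x \in s -> y \in s -> x != y -> m <= d x y.
Proof.
pose l := [seq d p.1 p.2 | p <- [seq p <- [seq (x, y) | x <- s, y <- s] | p.1 != p.2]].
have Hl : forall r, r \in l -> 0 < r.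
  move=> r /mapP [p]; rewrite mem_filter => /andP [pn _] ->.
  by apply: d_pos => // E; rewrite E eqxx in pn.
have [m [m0 Hm]] := minpos Hl.
exists m; split => // x y xs ys xy; apply: Hm.
apply: (map_f (fun p : T * T => d p.1 p.2)) (_ : (x, y) \in _).
by rewrite mem_filter /= xy; apply: allpairs_f.
Qed.

Lemma dir2 : wstar_D2P d x0 -> Lip_LTP d x0.
Proof.
move=> D2 N eps f Nfin eps0 fB.
have [s Ns] := (finite_seqP N).1 Nfin.
pose e := mn eps (1/2).
have e0 : 0 < e by apply: mn_gt => //; lra.
have e12 : e <= 1/2 by apply: mn_r.
have eeps : e <= eps by apply: mn_l.
have [m [m0 Hm]] := minsep s.
pose t := e * m / 2; pose delta := e * t / 4; pose et := e / 2.
have t0 : 0 < t by rewrite /t; apply: divr_gt0 => //; apply: mulr_gt0.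
have dl0 : 0 < delta by rewrite /delta; apply: divr_gt0 => //; apply: mulr_gt0.
pose V := [set g | lip_ball d x0 g /\ forall x, x \in s -> `|g x - f x| < delta].
have Vo : wstar_rel_open d x0 V.
  split; first by move=> g [].
  move=> g [gB Cg].
  have Hl : forall r, r \in [seq delta - `|g x - f x| | x <- s] -> 0 < r.
    by move=> r /mapP [x xs ->]; rewrite subr_gt0; apply: Cg.
  have [r [r0 Hr]] := minpos Hl.
  exists (size s), (fun i h => h (nth x0 s i)), r; split => //; split.
    move=> i eps' eps'0; exists [:: (1, nth x0 s i)] => L h L0 _ _.
    rewrite /molecule_eval big_cons big_nil /= mul1r addr0 subrr normr0.
    by apply: mulr_ge0 => //; apply: ltW.
  move=> h hB Hh; split => // x xs.
  have xi : (index x s < size s)%N by rewrite index_mem.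
  have := Hh (Ordinal xi); rewrite /= nth_index // => H.
  have := Hr _ (map_f (fun x => delta - `|g x - f x|) xs).
  have := ler_normD (h x - g x) (g x - f x).
  have -> : h x - g x + (g x - f x) = h x - f x by ring.
  lra.
have := D2 V Vo; rewrite /lip_diam.
set E := [set r | _] => HV.
have fV : V f by split => // x _; rewrite subrr normr0.
have E0 : E !=set0 by exists (lipnorm d (f \- f)), f, f.
have : 2 - et < sup E by rewrite HV; [rewrite /et; lra | exists f].
move/(sup_gt E0) => [_ [g [h [Vg [Vh ->]]]] Hgt].
move: Hgt; rewrite /lipnorm; set S := [set r | _] => Hgt.
have S0 : S !=set0.
  have [//|S0'] := pselect (S !=set0).
  move: Hgt; rewrite (_ : S = set0); first by rewrite sup0 /et; lra.
  by apply/seteqP; split => // r Sr; apply: S0'; exists r.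
move/(sup_gt S0) : Hgt => [_ [u [v [uv ->]]] Hr].
exists u, v; split => // x y Nx Ny.
rewrite Ns in Nx Ny.
have Duv := d_pos hd uv.
rewrite ltr_pdivlMr //= in Hr.
case: Vg Vh => [gB Cg] [hB Ch].
have ht : 2 * t = e * m by rewrite /t; lra.
have hdl : 4 * delta = e * t by rewrite /delta; lra.
have het : 2 * et = e by rewrite /et; lra.
have key : (1 - e) * (`|f x - f y| + d u v) <= d x u + d y v.
  have [HA|HA] := lerP 0 (g u - h u - (g v - h v)).
    rewrite ger0_norm // in Hr.
    apply: (ltp_core hd e0 e12 m0 Hm ht hdl het fB gB hB Cg Ch _ Nx Ny); lra.
  rewrite ltr0_norm // in Hr.
  apply: (ltp_core hd e0 e12 m0 Hm ht hdl het fB hB gB Ch Cg _ Nx Ny); lra.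
have X0 : 0 <= `|f x - f y| + d u v by apply: addr_ge0 => //; apply: d_ge0.
have : 0 <= (eps - e) * (`|f x - f y| + d u v) by apply: mulr_ge0 => //; lra.
lra.
Qed.
End Dir2main.

Section Dir1.
Variables (R : realType) (T : choiceType) (d : T -> T -> R) (x0 : T).
Hypothesis hd : is_metric d.

Lemma ext_props (f' : T -> R) (s : seq T) u v a b :
  (forall y z, y \in x0 :: s -> z \in x0 :: s -> f' y <= f' z + d y z) ->
  f' x0 = 0 ->
  (forall x, x \in x0 :: s -> f' x <= a + d x u) ->
  (forall x, x \in x0 :: s -> f' x <= b + d x v) ->
  a <= Fm d x0 f' s u -> a <= b + d u v -> b <= Fm d x0 f' s v -> b <= a + d u v ->
  lip_ball d x0 (fun z => mn (Fm d x0 f' s z) (mn (a + d z u) (b + d z v))) /\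
  (forall x, x \in x0 :: s -> mn (Fm d x0 f' s x) (mn (a + d x u) (b + d x v)) = f' x) /\
  mn (Fm d x0 f' s u) (mn (a + d u u) (b + d u v)) = a /\
  mn (Fm d x0 f' s v) (mn (a + d v u) (b + d v v)) = b.
Proof.
move=> L1 f0 C1 C2 C3 C4 C5 C6.
have EN : forall x, x \in x0 :: s -> mn (Fm d x0 f' s x) (mn (a + d x u) (b + d x v)) = f' x.
  move=> x xs; rewrite (Fm_eq hd L1 xs); apply/le_anti/andP; split; first exact: mn_l.
  apply: mn_ge => //; apply: mn_ge; [exact: C1 | exact: C2].
split; last split => //; last split.
- split; first by rewrite EN ?inE ?eqxx.
  apply: lip_mn => //; first exact: Fm_lip.
  by apply: lip_mn => //; apply: lip_dist.
- rewrite d_refl // addr0; apply/le_anti/andP; split.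
    by apply: le_trans (mn_r _ _) (mn_l _ _).
  by apply: mn_ge => //; apply: mn_ge.
- rewrite d_refl // addr0 (d_sym hd v u); apply/le_anti/andP; split.
    by apply: le_trans (mn_r _ _) (mn_r _ _).
  by apply: mn_ge => //; apply: mn_ge.
Qed.

End Dir1.

Section Dir1main.
Variables (R : realType) (T : choiceType) (d : T -> T -> R) (x0 : T).
Hypothesis hd : is_metric d.

Lemma dir1 : Lip_LTP d x0 -> wstar_D2P d x0.
Proof.
move=> LTP V [Vsub Vop] [f Vf].
have fB := Vsub f Vf.
have [n [phi [eps0 [eps00 [Hfree Hnb]]]]] := Vop f Vf.
rewrite /lip_diam; set E := [set r | _].
have E0 : E !=set0 by exists (lipnorm d (f \- f)), f, f.
have Eub : ubound E 2.
  by move=> _ [g [h [Vg [Vh ->]]]]; apply: (lipnorm_le2 hd (Vsub _ Vg) (Vsub _ Vh)).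
apply/le_anti/andP; split; first exact: ge_sup.
apply/ler_addgt0Pr => eta eta0.
suff [g [h [Vg [Vh Hgh]]]] : exists g h, V g /\ V h /\ 2 - eta <= lipnorm d (g \- h).
  have := ub_le_sup (ex_intro _ 2 Eub) (_ : E (lipnorm d (g \- h))).
  by move=> /(_ (ex_intro _ g (ex_intro _ h (conj Vg (conj Vh erefl))))); lra.
have e30 : 0 < eps0 / 3 by apply: divr_gt0.
have /choice [c Hc] : forall i : 'I_n, exists c : seq (R * T),
    forall (L : R) (g : T -> R), 0 <= L -> lipschitz_with d L g -> g x0 = 0 ->
      `|phi i g - molecule_eval c g| <= eps0 / 3 * L.
  by move=> i; apply: Hfree.
pose s := flatten [seq [seq p.2 | p <- c i] | i <- enum 'I_n].
pose N := [set` (x0 :: s)].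
have Nfin : finite_set N by apply: finite_seq.
pose K := \big[Order.max/0]_(i < n) `|molecule_eval (c i) f|.
have HK : forall i, `|molecule_eval (c i) f| <= `|K|.
  by move=> i; apply: le_trans (le_bigmax _ _ i) (ler_norm _).
have K1 : 0 < 3 * (`|K| + 1) by apply: mulr_gt0 => //; apply: ltr_wpDl.
pose e := mn (1/2) (mn (eta/4) (eps0 / (3 * (`|K| + 1)))).
have e0 : 0 < e.
  apply: mn_gt; first lra.
  by apply: mn_gt; [lra | apply: divr_gt0].
have e12 : e <= 1/2 by apply: mn_l.
have eeta : e <= eta/4 by apply: le_trans (mn_r _ _) (mn_l _ _).
have eK : e * (3 * (`|K| + 1)) <= eps0.
  by rewrite -ler_pdivlMr //; apply: le_trans (mn_r _ _) (mn_r _ _).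
have [u [v [uv Hltp]]] := LTP N e f Nfin e0 fB.
have D0 := d_pos hd uv.
pose f' := fun z => (1 - e) * f z.
pose cc := (1 - e) * d u v.
have cc0 : 0 <= cc by apply: mulr_ge0; lra.
have ccD : cc <= d u v.
  have : 0 <= e * d u v by apply: mulr_ge0; lra.
  rewrite /cc; lra.
pose F := Fm d x0 f' s.
have L1 : forall y z, y \in x0 :: s -> z \in x0 :: s -> f' y <= f' z + d y z.
  move=> y z _ _; have := lipE fB.2 y z.
  have : 0 <= e * d y z by apply: mulr_ge0; [lra | apply: d_ge0].
  have : 0 <= (1 - e) * (f z + d y z - f y).
    by apply: mulr_ge0; [lra | have := lipE fB.2 y z; lra].
  rewrite /f'; lra.
have f'0 : f' x0 = 0 by rewrite /f' fB.1 mulr0.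
have LT : forall x y, x \in x0 :: s -> y \in x0 :: s ->
    f' x - f' y + cc <= d x u + d y v /\ f' y - f' x + cc <= d x u + d y v.
  move=> x y xs ys; have := Hltp x y xs ys.
  have := ler_norm (f x - f y); have := ler_norm (f y - f x); rewrite distrC => n1 n2.
  have : 0 <= (1 - e) * (`|f x - f y| - (f x - f y)) by apply: mulr_ge0; lra.
  have : 0 <= (1 - e) * (`|f x - f y| - (f y - f x)) by apply: mulr_ge0; lra.
  rewrite /f' /cc; split; lra.
have Flip : forall x w, x \in x0 :: s -> f' x - d x w <= F w.
  move=> x w xs; apply: Fm_ge => y ys; have := L1 x y xs ys.
  have := d_tri hd x w y; rewrite (d_sym hd x w); lra.
pose a := mn (F u) (F v + cc); pose b := a - cc.
pose a' := mn (F u) (F v - cc); pose b' := a' + cc.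
have aC1 : forall x, x \in x0 :: s -> f' x <= a + d x u.
  move=> x xs; suff: f' x - d x u <= a by lra.
  apply: mn_ge; first exact: Flip.
  have : f' x - d x u - cc <= F v.
    by apply: Fm_ge => y ys; have := (LT x y xs ys).1; rewrite (d_sym hd v y); lra.
  lra.
have aC2 : forall x, x \in x0 :: s -> f' x <= b + d x v.
  move=> x xs; suff: f' x - d x v + cc <= a by rewrite /b; lra.
  apply: mn_ge; last by have := Flip x v xs; lra.
  by apply: Fm_ge => y ys; have := (LT y x ys xs).2; rewrite (d_sym hd u y); lra.
have aC3 : a <= F u by apply: mn_l.
have aC4 : a <= b + d u v by rewrite /b; lra.
have aC5 : b <= F v by have := mn_r (F u) (F v + cc); rewrite /b -/a; lra.
have aC6 : b <= a + d u v by rewrite /b; lra.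
have a'C1 : forall x, x \in x0 :: s -> f' x <= a' + d x u.
  move=> x xs; suff: f' x - d x u <= a' by lra.
  apply: mn_ge; first exact: Flip.
  have : f' x - d x u + cc <= F v.
    by apply: Fm_ge => y ys; have := (LT x y xs ys).1; rewrite (d_sym hd v y); lra.
  lra.
have a'C2 : forall x, x \in x0 :: s -> f' x <= b' + d x v.
  move=> x xs; suff: f' x - d x v - cc <= a' by rewrite /b'; lra.
  apply: mn_ge; last by have := Flip x v xs; lra.
  by apply: Fm_ge => y ys; have := (LT y x ys xs).2; rewrite (d_sym hd u y); lra.
have a'C3 : a' <= F u by apply: mn_l.
have a'C4 : a' <= b' + d u v by rewrite /b'; lra.
have a'C5 : b' <= F v by have := mn_r (F u) (F v - cc); rewrite /b' -/a'; lra.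
have a'C6 : b' <= a' + d u v by rewrite /b'; lra.
have [GB [GN [Gu Gv]]] := ext_props hd L1 f'0 aC1 aC2 aC3 aC4 aC5 aC6.
have [HB [HN [Hu Hv]]] := ext_props hd L1 f'0 a'C1 a'C2 a'C3 a'C4 a'C5 a'C6.
have close : forall Gx, lip_ball d x0 Gx -> (forall x, x \in x0 :: s -> Gx x = f' x) -> V Gx.
  move=> Gx GxB GxN; apply: Hnb => // i.
  have H1 := Hc i 1 Gx ler01 GxB.2 GxB.1.
  have H2 := Hc i 1 f ler01 fB.2 fB.1.
  have Hm : molecule_eval (c i) Gx = (1 - e) * molecule_eval (c i) f.
    apply: mol_scale => p pc; apply: GxN; rewrite inE; apply/orP; right.
    apply/flatten_mapP; exists i; first by rewrite mem_enum.
    by apply: (map_f (fun p : R * T => p.2)).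
  have := HK i; rewrite mulr1 in H1 H2.
  move: H1 H2; rewrite Hm; set M := molecule_eval (c i) f.
  rewrite !ler_norml ltr_norml => H1 H2 H3.
  have : 0 <= e * (`|K| - M) by apply: mulr_ge0; lra.
  have : 0 <= e * (`|K| + M) by apply: mulr_ge0; lra.
  lra.
exists (fun z => mn (F z) (mn (a + d z u) (b + d z v))).
exists (fun z => mn (F z) (mn (a' + d z u) (b' + d z v))).
split; first by apply: close.
split; first by apply: close.
have := lipnorm_ge hd GB HB uv => /=.
rewrite Gu Gv Hu Hv /b /b'.
have -> : a - a' - (a - cc - (a' + cc)) = 2 * cc by ring.
rewrite ger0_norm; last by apply: mulr_ge0.
have -> : 2 * cc / d u v = 2 * (1 - e) by rewrite /cc; field; apply: lt0r_neq0.
lra.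
Qed.
End Dir1main.

Theorem proposition4p2 (R : realType) (T : Type) (d : T -> T -> R) (x0 : T) :
  is_metric d -> (wstar_D2P d x0 <-> Lip_LTP d x0).
Proof.
elim/Pchoice: T => T in d x0 *.
move=> hd; split; [exact: dir2 | exact: dir1].
Qed.
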